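(* Let $G,\Omega\in\{\mathbb{D},\mathbb{H}\}$, where $\mathbb{D}=\{z\in\mathbb{C}:|z|<1\}$ and $\mathbb{H}=\{z\in\mathbb{C}:\operatorname{Im}z>0\}$, let $f:G\to\Omega$ be a Möbius transformation of $G$ onto $\Omega$, and let $1\le p\le\infty$. Then $f:(G,b_{G,p})\to(\Omega,b_{\Omega,p})$ is $L$-Lipschitz, i.e. $b_{\Omega,p}(f(z_1),f(z_2))\le L\,b_{G,p}(z_1,z_2)$ for all $z_1,z_2\in G$, with $L=2^{2-1/p}$ if $G=\mathbb{D}$ and $L=2^{1-1/p}$ if $G=\mathbb{H}$ (with $1/p=0$ when $p=\infty$).
   Context: For a domain $G\subsetneq\mathbb{C}$, $z_1,z_2\in G$ and $1\le p<\infty$, $b_{G,p}(z_1,z_2)=\sup_{z\in\partial G}\frac{|z_1-z_2|}{\sqrt[p]{|z_1-z|^p+|z-z_2|^p}}$, and $b_{G,\infty}(z_1,z_2)=\sup_{z\in\partial G}\frac{|z_1-z_2|}{\max\{|z_1-z|,|z_2-z|\}}$. *)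

(* Defs.v *)
From mathcomp Require Import all_boot all_order all_algebra.
From mathcomp Require Import all_classical all_reals all_analysis.
From mathcomp Require Export complex.
Set Implicit Arguments. Unset Strict Implicit. Unset Printing Implicit Defensive.
Import Order.TTheory GRing.Theory Num.Theory.
Local Open Scope ring_scope.
Local Open Scope classical_set_scope.

Section Defs.
Variable R : realType.
Local Notation C := R[i].

Definition cabs (z : C) : R := Normc.normc z.

Definition cboundary (A : set C) : set C :=
  [set z | forall e : R, 0 < e ->
     (exists a, A a /\ cabs (z - a) < e) /\
     (exists b, ~ A b /\ cabs (z - b) < e)].

Definition unit_disk : set C := [set z | cabs z < 1].
Definition upper_half_plane : set C := [set z | 0 < Im z].

(* p in [1, +oo] is encoded as an extended real; the quotient
   |z1 - z2| / ||(|z1 - z|, |z - z2|)||_p for a boundary point z *)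
Definition bquot (p : \bar R) (z1 z2 z : C) : R :=
  match p with
  | (r%:E)%E => cabs (z1 - z2) /
      powR (powR (cabs (z1 - z)) r + powR (cabs (z - z2)) r) r^-1
  | _ => cabs (z1 - z2) / Num.max (cabs (z1 - z)) (cabs (z2 - z))
  end.

Definition bGp (G : set C) (p : \bar R) (z1 z2 : C) : R :=
  sup [set bquot p z1 z2 z | z in cboundary G].

Definition inv_ext (p : \bar R) : R :=
  match p with (r%:E)%E => r^-1 | _ => 0 end.

Definition mobius_onto (G Om : set C) (f : C -> C) : Prop :=
  (exists a b c d : C, a * d - b * c != 0 /\
     forall z, G z -> c * z + d != 0 /\ f z = (a * z + b) / (c * z + d)) /\
  set_bij G Om f.

End Defs.

(* Main.v *)
Require Import Defs.
From mathcomp Require Import all_boot all_order all_algebra.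
From mathcomp Require Import all_classical all_reals all_analysis.
From mathcomp Require Import complex.
From mathcomp Require Import ring lra.
Import Order.TTheory GRing.Theory Num.Theory.
Local Open Scope ring_scope.
Local Open Scope classical_set_scope.
Local Open Scope complex_scope.
Section S.
Variable R : realType.
Local Notation C := R[i].
Local Notation re := (@complex.Re R).
Local Notation im := (@complex.Im R).
Definition n2 (z : C) : R := re z ^+ 2 + im z ^+ 2.

Lemma reD (u v : C) : re (u + v) = re u + re v. Proof. by case: u; case: v. Qed.
Lemma imD (u v : C) : im (u + v) = im u + im v. Proof. by case: u; case: v. Qed.
Lemma reN (u : C) : re (- u) = - re u. Proof. by case: u. Qed.
Lemma imN (u : C) : im (- u) = - im u. Proof. by case: u. Qed.
Lemma reB (u v : C) : re (u - v) = re u - re v. Proof. by case: u; case: v. Qed.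
Lemma imB (u v : C) : im (u - v) = im u - im v. Proof. by case: u; case: v. Qed.
Lemma reM (u v : C) : re (u * v) = re u * re v - im u * im v.
Proof. by case: u; case: v. Qed.
Lemma imM (u v : C) : im (u * v) = re u * im v + im u * re v.
Proof. by case: u => a b; case: v => c d /=. Qed.
Lemma reV (u : C) : re (u^-1) = re u / n2 u. Proof. by case: u. Qed.
Lemma imV (u : C) : im (u^-1) = - (im u / n2 u). Proof. by case: u. Qed.
Lemma re1 : re 1 = 1. Proof. by []. Qed.
Lemma im1 : im 1 = 0. Proof. by []. Qed.
Lemma re0 : re 0 = 0. Proof. by []. Qed.
Lemma im0 : im 0 = 0. Proof. by []. Qed.
Lemma reC (x y : R) : re (x +i* y) = x. Proof. by []. Qed.
Lemma imC (x y : R) : im (x +i* y) = y. Proof. by []. Qed.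

Lemma n2_ge0 (z : C) : 0 <= n2 z. Proof. by rewrite /n2 addr_ge0 ?sqr_ge0. Qed.
Lemma cabsE (z : C) : cabs z = Num.sqrt (n2 z). Proof. by case: z. Qed.
Lemma cabs_ge0 (z : C) : 0 <= cabs z. Proof. by rewrite cabsE sqrtr_ge0. Qed.
Lemma cabs_sqr (z : C) : cabs z ^+ 2 = n2 z. Proof. by rewrite cabsE sqr_sqrtr ?n2_ge0. Qed.
Lemma cabsD (u v : C) : cabs (u + v) <= cabs u + cabs v. Proof. exact: le_normcD. Qed.
Lemma cabsN (u : C) : cabs (- u) = cabs u. Proof. exact: normcN. Qed.
Lemma cabsB (u v : C) : cabs (u - v) = cabs (v - u). Proof. by rewrite -cabsN opprB. Qed.
Lemma cabsM (u v : C) : cabs (u * v) = cabs u * cabs v. Proof. exact: Normc.normcM. Qed.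
Lemma cabsV (u : C) : cabs (u^-1) = (cabs u)^-1. Proof. exact: Normc.normcV. Qed.
Lemma cabs_le (u v : C) : n2 u <= n2 v -> cabs u <= cabs v.
Proof. by move=> h; rewrite !cabsE ler_sqrt // n2_ge0. Qed.
Lemma cabs_lt1 (z : C) : (cabs z < 1) = (n2 z < 1).
Proof. by rewrite cabsE -{1}sqrtr1 ltr_sqrt ?ltr01. Qed.
Lemma cabs_gt1 (z : C) : (1 < cabs z) = (1 < n2 z).
Proof. by rewrite !ltNge cabsE -{1}sqrtr1 ler_sqrt ?ler01. Qed.
Lemma abs_im_le (z : C) : `|im z| <= cabs z.
Proof. by rewrite cabsE -sqrtr_sqr ler_sqrt ?n2_ge0 // /n2 lerDr sqr_ge0. Qed.
Lemma uhpE (z : C) : upper_half_plane z <-> 0 < im z.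
Proof. by rewrite /upper_half_plane /= -complexIm ltcR. Qed.
Lemma udE (z : C) : unit_disk z <-> n2 z < 1.
Proof. by rewrite /unit_disk /= cabs_lt1. Qed.

Ltac simpC := rewrite /n2 ?(reD,imD,reB,imB,reM,imM,reN,imN,reC,imC,re1,im1,re0,im0).

Lemma cabs_lt (z : C) (e : R) : 0 < e -> n2 z < e ^+ 2 -> cabs z < e.
Proof.
move=> e0 h; rewrite cabsE -(ger0_norm (ltW e0)) -sqrtr_sqr ltr_sqrt //.
by rewrite exprn_gt0.
Qed.
Lemma cabs_ler (z : C) (e : R) : 0 <= e -> n2 z <= e ^+ 2 -> cabs z <= e.
Proof.
move=> e0 h; rewrite cabsE -(ger0_norm e0) -sqrtr_sqr ler_sqrt //.
by rewrite exprn_ge0.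
Qed.

Definition dom (b : bool) : set C := if b then @unit_disk R else @upper_half_plane R.
Definition J (b : bool) (z : C) : R := if b then 1 - n2 z else im z.

Lemma domE b z : dom b z <-> 0 < J b z.
Proof. by case: b; rewrite /dom /J ?udE ?uhpE ?subr_gt0. Qed.

Lemma bd_J b w : cboundary (dom b) w -> J b w = 0.
Proof.
rewrite /cboundary /=; case: b => /= h; rewrite /J.
- have [lt1|gt1|] := ltgtP (n2 w) 1; last by move=> ->; rewrite subrr.
  + have c1 : cabs w < 1 by rewrite cabs_lt1.
    have e0 : 0 < 1 - cabs w by rewrite subr_gt0.
    have [_ [b [nb hb]]] := h (1 - cabs w) e0.
    exfalso; apply: nb; rewrite /dom udE -cabs_lt1.
    have -> : b = w + (b - w) by rewrite addrC subrK.
    apply: (le_lt_trans (cabsD _ _)); rewrite cabsB; lra.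
  + have c1 : 1 < cabs w by rewrite cabs_gt1.
    have e0 : 0 < cabs w - 1 by rewrite subr_gt0.
    have [[a [na ha]] _] := h (cabs w - 1) e0.
    move: na; rewrite /dom udE -cabs_lt1 => na.
    have : cabs w <= cabs a + cabs (w - a).
      by rewrite -[X in cabs X <= _](subrK a) addrC cabsD.
    lra.
- have [lt0|gt0|//] := ltgtP (im w) 0.
  + have e0 : 0 < - im w by rewrite oppr_gt0.
    have [[a [na ha]] _] := h (- im w) e0.
    move: na; rewrite /dom uhpE => na.
    have := abs_im_le (w - a); rewrite imB ler_norml => /andP[h2 h3].
    lra.
  + have [_ [b [nb hb]]] := h (im w) gt0.
    move: nb; rewrite /dom uhpE => nb.
    have := abs_im_le (w - b); rewrite imB ler_norml => /andP[h2 h3].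
    lra.
Qed.

Lemma bd_J' b w : J b w = 0 -> cboundary (dom b) w.
Proof.
rewrite /J /cboundary; case: b => hw e e0; rewrite /dom.
- have hw' : n2 w = 1 by lra.
  pose k := Num.min e 1 / 2.
  have k0 : 0 < k by rewrite /k divr_gt0 // lt_min e0 ltr01.
  have ke : k <= e / 2 by rewrite /k ler_pM2r ?invr_gt0 // ge_min lexx.
  have k1 : k <= 1 / 2 by rewrite /k ler_pM2r ?invr_gt0 // ge_min lexx orbT.
  move: hw'; rewrite /n2 => hw'.
  split.
  + exists (w * ((1 - k) +i* 0)); split.
      rewrite udE; simpC; nra.
    apply: cabs_lt => //; simpC; nra.
  + exists (w * ((1 + k) +i* 0)); split.
      rewrite udE; simpC; nra.
    apply: cabs_lt => //; simpC; nra.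
- split.
  + exists (w + (0 +i* (e / 2))); split.
      rewrite uhpE; simpC; rewrite hw; lra.
    apply: cabs_lt => //; simpC; nra.
  + exists (w - (0 +i* (e / 2))); split.
      rewrite uhpE; simpC; rewrite hw; lra.
    apply: cabs_lt => //; simpC; nra.
Qed.

Definition Mp (p : \bar R) (a b : R) : R :=
  match p with
  | (r%:E)%E => powR (powR a r + powR b r) r^-1
  | _ => Num.max a b
  end.

Lemma bquotE p z1 z2 z :
  bquot p z1 z2 z = cabs (z1 - z2) / Mp p (cabs (z1 - z)) (cabs (z - z2)).
Proof. by case: p => //= *; rewrite (cabsB z2). Qed.

Lemma powR_sub_le (x s r : R) : 0 <= x <= 1 -> 0 <= s -> 1 <= r ->
  powR (x * s) r <= x * powR s r.
Proof.
move=> /andP[x0 x1] s0 r1; have [->|xn0] := eqVneq x 0.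
  by rewrite !mul0r powR0 // gt_eqF // (lt_le_trans ltr01).
by apply: ge1r_powRZ => //; rewrite x1 andbT lt_neqAle eq_sym xn0.
Qed.

Lemma powR_add_le (a b r : R) : 0 <= a -> 0 <= b -> 1 <= r ->
  powR a r + powR b r <= powR (a + b) r.
Proof.
move=> a0 b0 r1; have [s0|] := eqVneq (a + b) 0.
  have a00 : a = 0 by lra.
  have b00 : b = 0 by lra.
  by rewrite a00 b00 addr0 powR0 ?addr0 // gt_eqF // (lt_le_trans ltr01).
move=> sn0; have sp : 0 < a + b by rewrite lt_neqAle eq_sym sn0 addr_ge0.
have ea : a = (a / (a + b)) * (a + b) by rewrite divfK.
have eb : b = (b / (a + b)) * (a + b) by rewrite divfK.
have h1 : 0 <= a / (a + b) <= 1.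
  apply/andP; split; first by rewrite divr_ge0 // ltW.
  by rewrite ler_pdivrMr // mul1r lerDl.
have h2 : 0 <= b / (a + b) <= 1.
  apply/andP; split; first by rewrite divr_ge0 // ltW.
  by rewrite ler_pdivrMr // mul1r lerDr.
rewrite [X in powR X r + _]ea [X in _ + powR X r]eb.
apply: (le_trans (lerD (powR_sub_le _ _ _ h1 (ltW sp) r1) (powR_sub_le _ _ _ h2 (ltW sp) r1))).
by rewrite -mulrDl -mulrDl divff // mul1r.
Qed.

Lemma Mp_le p a b : (1 <= p)%E -> 0 <= a -> 0 <= b -> Mp p a b <= a + b.
Proof.
case: p => [r| |] //= ; rewrite ?lee_fin => r1 a0 b0; last first.
  by rewrite ge_max lerDl lerDr a0 b0.
have r0 : 0 < r by apply: lt_le_trans ltr01 r1.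
apply: (le_trans (ge0_ler_powR _ _ _ (powR_add_le _ _ _ a0 b0 r1))).
- by rewrite invr_ge0 ltW.
- by rewrite nnegrE addr_ge0 ?powR_ge0.
- by rewrite nnegrE powR_ge0.
by rewrite -powRrM divff ?gt_eqF // powRr1 // addr_ge0.
Qed.

Lemma Mp_ge p a b : (1 <= p)%E -> 0 <= a -> 0 <= b ->
  a + b <= powR 2 (1 - inv_ext p) * Mp p a b.
Proof.
case: p => [r| |] //= ; rewrite ?lee_fin => r1 a0 b0; last first.
  rewrite subr0 powRr1 //.
  have h1 : a <= Num.max a b by rewrite le_max lexx.
  have h2 : b <= Num.max a b by rewrite le_max lexx orbT.
  lra.
have [->|rn1] := eqVneq r 1.
  by rewrite invr1 subrr powRr0 mul1r !powRr1 ?addr_ge0.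
have r1' : 1 < r by rewrite lt_neqAle eq_sym rn1.
have r0 : 0 < r by apply: lt_le_trans ltr01 r1.
pose q := r / (r - 1).
have q0 : 0 < q by rewrite /q divr_gt0 // subr_gt0.
have pq : r^-1 + q^-1 = 1.
  rewrite /q invf_div; field; rewrite gt_eqF //.
have := hoelder2 a0 b0 ler01 ler01 r0 q0 pq.
rewrite !mulr1 powR1 (mulrC (powR _ _)).
have -> : q^-1 = 1 - r^-1 by rewrite -pq addrC addKr.
by [].
Qed.

Definition kap (b : bool) : R := if b then 1 else 4.
Definition den b (z1 z2 : C) : R :=
  Num.sqrt (n2 (z1 - z2) + kap b * (J b z1 * J b z2)).
Definition tG b (z1 z2 : C) : R := cabs (z1 - z2) / den b z1 z2.
Definition cj (z : C) : C := re z +i* (- im z).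

Lemma den_gt0 b z1 z2 : dom b z1 -> dom b z2 -> 0 < den b z1 z2.
Proof.
move=> /domE h1 /domE h2; rewrite /den sqrtr_gt0.
have k0 : 0 < kap b by case: b {h1 h2}.
have n0 := n2_ge0 (z1 - z2).
have := mulr_gt0 k0 (mulr_gt0 h1 h2); lra.
Qed.

Lemma tG_ge0 b z1 z2 : 0 <= tG b z1 z2.
Proof. by rewrite /tG divr_ge0 ?cabs_ge0 ?sqrtr_ge0. Qed.

Lemma den_H z1 z2 : den false z1 z2 = cabs (z1 - cj z2).
Proof. rewrite /den cabsE /J /kap /cj; congr Num.sqrt; simpC; ring. Qed.

Lemma den_D z1 z2 : den true z1 z2 = cabs (1 - z1 * cj z2).
Proof. rewrite /den cabsE /J /kap /cj; congr Num.sqrt; simpC; ring. Qed.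

Lemma sum_ge_den b z1 z2 w : dom b z1 -> dom b z2 -> J b w = 0 ->
  den b z1 z2 <= cabs (z1 - w) + cabs (w - z2).
Proof.
case: b => h1 h2; rewrite /J => hw.
- rewrite den_D.
  have -> : 1 - z1 * cj z2 = (1 - z1 * cj w) + z1 * (cj w - cj z2) by ring.
  apply: (le_trans (cabsD _ _)); apply: lerD.
    apply: cabs_le; rewrite /cj; move: hw; simpC => hw; nra.
  move: h1 => /udE h1; apply: cabs_le.
  have -> : n2 (z1 * (cj w - cj z2)) = n2 z1 * n2 (w - z2).
    by rewrite /cj; simpC; ring.
  have := n2_ge0 (w - z2); have := n2_ge0 z1; nra.
- rewrite den_H.
  have -> : z1 - cj z2 = (z1 - w) + (w - cj z2) by ring.
  apply: (le_trans (cabsD _ _)); apply: lerD => //.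
  apply: cabs_le; rewrite /cj; simpC; rewrite hw; nra.
Qed.

Lemma K_gt0 (p : \bar R) : 0 < powR 2 (1 - inv_ext p).
Proof. by apply: powR_gt0. Qed.

Lemma div_le_aux (N M D K : R) : 0 <= N -> 0 < D -> 0 < K -> D <= K * M ->
  N / M <= K * (N / D).
Proof.
move=> N0 D0 K0 h.
have M0 : 0 < M by rewrite -(pmulr_rgt0 _ K0); lra.
rewrite ler_pdivrMr //.
have -> : K * (N / D) * M = (N / D) * (K * M) by ring.
apply: (le_trans _ (ler_wpM2l _ h)); last by rewrite divr_ge0 // ltW.
by rewrite divfK // gt_eqF.
Qed.

Lemma bquot_ub b p z1 z2 w : (1 <= p)%E -> dom b z1 -> dom b z2 ->
  cboundary (dom b) w -> bquot p z1 z2 w <= powR 2 (1 - inv_ext p) * tG b z1 z2.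
Proof.
move=> p1 h1 h2 /bd_J hw; rewrite bquotE /tG.
apply: div_le_aux; first exact: cabs_ge0.
- exact: den_gt0.
- exact: K_gt0.
apply: (le_trans (sum_ge_den _ _ _ _ h1 h2 hw)).
by apply: Mp_ge; rewrite ?cabs_ge0.
Qed.
Lemma polyf (r1 r2 : R) : 0 <= r1 <= 1 -> 0 <= r2 <= 1 ->
  r1^+2 + r2^+2 + 4*r1*r2 - 2*r1 - 2*r2 - 2*r1^+2*r2^+2 <= 0.
Proof.
move=> /andP[a1 a2] /andP[b1 b2].
have [h|h] := leP (2 * r1^+2) 1.
- (* convex in r2 : f(r2) <= (1-r2) f(0) + r2 f(1) *)
  have h1 : 0 <= (1 - 2 * r1^+2) * (r2 * (1 - r2)) by rewrite mulr_ge0 ?subr_ge0 // mulr_ge0 // subr_ge0.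
  have h2 : 0 <= (1 - r2) * (r1 * (2 - r1)) by rewrite mulr_ge0 ?subr_ge0 // mulr_ge0 // subr_ge0; lra.
  have h3 : 0 <= r2 * (1 - r1)^+2 by rewrite mulr_ge0 // sqr_ge0.
  have -> : r1^+2 + r2^+2 + 4*r1*r2 - 2*r1 - 2*r2 - 2*r1^+2*r2^+2 = 
    - ((1 - 2 * r1^+2) * (r2 * (1 - r2))) - (1 - r2) * (r1 * (2 - r1)) - r2 * (1 - r1)^+2 by ring.
  lra.
- have h1 : 0 <= (1 - r2) * (r1 * (1 - r1)) by rewrite mulr_ge0 ?subr_ge0 // mulr_ge0 // subr_ge0.
  have h2 : 0 <= (2 * r1^+2 - 1) * (1 - r2)^+2 by rewrite mulr_ge0 ?sqr_ge0 // subr_ge0 ltW.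
  have h3 : 0 <= (1 - r1)^+2 by rewrite sqr_ge0.
  have -> : r1^+2 + r2^+2 + 4*r1*r2 - 2*r1 - 2*r2 - 2*r1^+2*r2^+2 = 
    - (1 - r1)^+2 - 4 * ((1 - r2) * (r1 * (1 - r1))) - (2 * r1^+2 - 1) * (1 - r2)^+2 by ring.
  lra.
Qed.
Lemma keyineq (r1 r2 mu : R) : 0 <= r1 <= 1 -> 0 <= r2 <= 1 -> 0 <= mu -> mu <= r1 + r2 ->
  2 * mu^+2 - 2 * mu <= r1^+2 + r2^+2 + 2 * (r1^+2 * r2^+2).
Proof.
move=> h1 h2 m0 m1; have := polyf _ _ h1 h2.
move: h1 h2 => /andP[a1 a2] /andP[b1 b2] hf.
have [h|h] := leP mu 1.
- have : 0 <= mu * (1 - mu) by rewrite mulr_ge0 // subr_ge0.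
  have : 0 <= r1^+2 * r2^+2 by rewrite mulr_ge0 // sqr_ge0.
  have := sqr_ge0 r1; have := sqr_ge0 r2.
  lra.
- have : 0 <= (r1 + r2 - mu) * (r1 + r2 + mu - 1) by rewrite mulr_ge0 // subr_ge0; lra.
  nra.
Qed.

Lemma sqr_le_aux (x y : R) : 0 <= y -> x ^+ 2 <= y ^+ 2 -> x <= y.
Proof. move=> y0 h; nra. Qed.

Lemma lb_H z1 z2 : dom false z1 -> dom false z2 ->
  exists w, J false w = 0 /\ cabs (z1 - w) + cabs (w - z2) <= den false z1 z2.
Proof.
move=> /domE h1 /domE h2; rewrite /J in h1 h2.
pose s := im z1 / (im z1 + im z2).
have sp : 0 <= s by rewrite /s divr_ge0 // ltW // addr_gt0.
have s1 : s <= 1 by rewrite /s ler_pdivrMr ?addr_gt0 // mul1r lerDl ltW.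
have yy : im z1 + im z2 != 0 by rewrite gt_eqF // addr_gt0.
set E := n2 (z1 - z2) + kap false * (J false z1 * J false z2).
have E0 : 0 <= E by rewrite /E /kap /J; have := n2_ge0 (z1 - z2); nra.
have dE : den false z1 z2 ^+ 2 = E by rewrite /den sqr_sqrtr.
have d0 : 0 <= den false z1 z2 by rewrite /den sqrtr_ge0.
exists ((re z1 * im z2 + re z2 * im z1) / (im z1 + im z2) +i* 0); split => //.
have ha : cabs (z1 - ((re z1 * im z2 + re z2 * im z1) / (im z1 + im z2) +i* 0))
           <= s * den false z1 z2.
  apply: cabs_ler; first by rewrite mulr_ge0.
  rewrite exprMn dE /E /kap /J /s; simpC.
  rewrite le_eqVlt; apply/orP; left; apply/eqP; field => //.
have hb : cabs (((re z1 * im z2 + re z2 * im z1) / (im z1 + im z2) +i* 0) - z2)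
           <= (1 - s) * den false z1 z2.
  apply: cabs_ler; first by rewrite mulr_ge0 // subr_ge0.
  rewrite exprMn dE /E /kap /J /s; simpC.
  rewrite le_eqVlt; apply/orP; left; apply/eqP; field => //.
have := lerD ha hb; lra.
Qed.

Lemma lb_D z1 z2 : dom true z1 -> dom true z2 ->
  exists w, J true w = 0 /\ cabs (z1 - w) + cabs (w - z2) <= 2 * den true z1 z2.
Proof.
move=> /domE h1 /domE h2; rewrite /J in h1 h2.
set mu := cabs (z1 + z2).
have mu2 : mu ^+ 2 = n2 (z1 + z2) by rewrite /mu cabs_sqr.
have mu0 : 0 <= mu by rewrite /mu cabs_ge0.
have [w [hw1 hw2]] : exists w : C, n2 w = 1 /\
    re w * (re z1 + re z2) + im w * (im z1 + im z2) = mu.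
  have [m0|mn0] := eqVneq mu 0.
    exists 1; split; first by rewrite /n2 re1 im1; ring.
    move: mu2; rewrite m0 /n2 reD imD => e; rewrite re1 im1.
    have := sqr_ge0 (re z1 + re z2); have := sqr_ge0 (im z1 + im z2); nra.
  have mp : 0 < mu by rewrite lt_neqAle eq_sym mn0.
  exists (((re z1 + re z2) / mu) +i* ((im z1 + im z2) / mu)); split.
    move: mu2; rewrite /n2 reD imD reC imC => e.
    by rewrite !expr_div_n -mulrDl -e divff // expf_neq0.
  move: mu2; rewrite /n2 reD imD reC imC => e.
  have -> : (re z1 + re z2) / mu * (re z1 + re z2) + (im z1 + im z2) / mu * (im z1 + im z2)
     = ((re z1 + re z2) ^+ 2 + (im z1 + im z2) ^+ 2) / mu by field; rewrite gt_eqF.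
  by rewrite -e expr2 mulfK // gt_eqF.
have d0 : 0 <= den true z1 z2 by rewrite /den sqrtr_ge0.
have dE : den true z1 z2 ^+ 2 = n2 (z1 - z2) + (1 - n2 z1) * (1 - n2 z2).
  by rewrite /den sqr_sqrtr /kap /J ?mul1r //; have := n2_ge0 (z1 - z2); nra.
exists w; split; first by rewrite /J hw1 subrr.
have hsum : cabs (z1 - w) ^+ 2 + cabs (w - z2) ^+ 2 = 2 + n2 z1 + n2 z2 - 2 * mu.
  rewrite !cabs_sqr.
  have -> : n2 (z1 - w) + n2 (w - z2) = n2 z1 + n2 z2 + 2 * n2 w
     - 2 * (re w * (re z1 + re z2) + im w * (im z1 + im z2)) by rewrite /n2 !(reB, imB); ring.
  rewrite hw1 hw2; ring.
have hpar : n2 (z1 - z2) = 2 * n2 z1 + 2 * n2 z2 - mu ^+ 2.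
  rewrite mu2; simpC; ring.
have hmu : mu <= cabs z1 + cabs z2 by exact: cabsD.
have r1 : 0 <= cabs z1 <= 1.
  by rewrite cabs_ge0 /=; apply: ltW; rewrite cabs_lt1; lra.
have r2 : 0 <= cabs z2 <= 1.
  by rewrite cabs_ge0 /=; apply: ltW; rewrite cabs_lt1; lra.
have := keyineq _ _ _ r1 r2 mu0 hmu; rewrite !cabs_sqr => hk.
apply: sqr_le_aux; first by rewrite mulr_ge0.
have := cabs_ge0 (z1 - w); have := cabs_ge0 (w - z2).
rewrite exprMn dE hpar.
set A := cabs (z1 - w); set B := cabs (w - z2).
move=> B0 A0.
have : (A + B) ^+ 2 <= 2 * (A ^+ 2 + B ^+ 2) by have := sqr_ge0 (A - B); nra.
rewrite hsum => hAB.
apply: (le_trans hAB); nra.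
Qed.
Set Implicit Arguments. Unset Strict Implicit.
Lemma quad_le0 (A B D : R) : (forall x, A * x ^+ 2 + B * x + D <= 0) -> A <= 0.
Proof.
move=> h; rewrite leNgt; apply/negP => A0.
pose X := 1 + (`|B| + `|D| + 1) / A.
have hX : A * X = A + (`|B| + `|D| + 1) by rewrite /X mulrDr mulr1 mulrCA divff ?gt_eqF // mulr1.
have X1 : 1 <= X by rewrite /X lerDl divr_ge0 // ltW.
have hB : - (`|B| * X) <= B * X.
  rewrite -mulNr ler_wpM2r //; first lra.
  by rewrite lerNl -normrN ler_norm.
have hD : - `|D| <= D by rewrite lerNl -normrN ler_norm.
have := h X.
have : A * X ^+ 2 = (A * X) * X by rewrite expr2 mulrA.
move=> ->; rewrite hX.
have := normr_ge0 B; have := normr_ge0 D.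
nra.
Qed.

Lemma lin_le0 (B D : R) : (forall x, B * x + D <= 0) -> B = 0.
Proof.
move=> h; apply/eqP/negPn/negP => Bn0.
have := h ((1 - D) / B); rewrite mulrC divfK //; lra.
Qed.

Lemma classH (A B C D : R) :
  (forall x y, 0 < y <-> 0 < A * (x ^+ 2 + y ^+ 2) + B * x + C * y + D) ->
  [/\ A = 0, B = 0, D = 0 & 0 < C].
Proof.
move=> h.
have h0 x : A * x ^+ 2 + B * x + D <= 0.
  rewrite leNgt; apply/negP => hp.
  have := (proj2 (h x 0)); rewrite expr0n /= addr0 mulr0 addr0 ltxx.
  by move=> /(_ hp).
have h1 x : 0 < A * x ^+ 2 + B * x + (A + C + D).
  have := (proj1 (h x 1) ltr01); rewrite expr1n mulr1 mulrDr; lra.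
have Ale := quad_le0 h0.
have Age : - A <= 0.
  apply: (@quad_le0 _ (- B) (- (A + C + D))) => x; have := h1 x; lra.
have A0 : A = 0 by lra.
have h0' x : B * x + D <= 0 by have := h0 x; rewrite A0 mul0r add0r.
have B0 := lin_le0 h0'.
have D0 : D <= 0 by have := h0' 0; rewrite mulr0 add0r.
have hy y : 0 < y -> 0 < C * y + D.
  move=> y0; have := proj1 (h 0 y) y0; rewrite A0 B0 !mul0r !add0r.
  by [].
have C1 : 0 < C + D by have := hy 1 ltr01; rewrite mulr1.
have Dz : D = 0.
  apply/eqP; rewrite eq_le D0 /=; rewrite leNgt; apply/negP => Dn.
  have Cp : 0 < C by lra.
  have yp : 0 < - D / (2 * C) by rewrite divr_gt0 ?mulr_gt0 ?oppr_gt0.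
  have := hy _ yp.
  have -> : C * (- D / (2 * C)) + D = D / 2 by field; rewrite gt_eqF.
  lra.
split => //; lra.
Qed.

Lemma quad_root (A B D : R) : (forall t, 0 <= t < 1 -> 0 < A * t ^+ 2 + B * t + D) ->
  A + B + D <= 0 -> A + B + D = 0.
Proof.
move=> h hle; apply/eqP; rewrite eq_le hle /= leNgt; apply/negP => hlt.
set hh := A + B + D in hle hlt.
pose K := `|2 * A + B| + `|A| + 1.
have K0 : 0 < K by rewrite /K ltr_pwDr // addr_ge0.
pose d := - hh / (K - hh).
have Kh : 0 < K - hh by lra.
have d0 : 0 < d by rewrite /d divr_gt0 // oppr_gt0.
have dK : d * (K - hh) = - hh by rewrite /d divfK // gt_eqF.
have d1 : d < 1.
  by rewrite /d ltr_pdivrMr // mul1r; lra.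
have ht : 0 <= 1 - d < 1 by apply/andP; split; lra.
have := h _ ht.
have -> : A * (1 - d) ^+ 2 + B * (1 - d) + D = hh - d * (2 * A + B) + A * d ^+ 2.
  by rewrite /hh; ring.
have e1 : - (d * (2 * A + B)) <= d * `|2 * A + B|.
  rewrite -mulrN; apply: ler_wpM2l; first exact: ltW.
  rewrite -normrN; exact: ler_norm.
have dd : d ^+ 2 <= d by rewrite expr2 ger_pMl //; lra.
have e2a : A * d ^+ 2 <= `|A| * d ^+ 2 := ler_wpM2r (sqr_ge0 d) (ler_norm A).
have e2b : `|A| * d ^+ 2 <= `|A| * d := ler_wpM2l (normr_ge0 A) dd.
move: dK; rewrite /K => dK.
nra.
Qed.

Lemma classD (A B C D : R) :
  (forall x y, x ^+ 2 + y ^+ 2 < 1 <-> 0 < A * (x ^+ 2 + y ^+ 2) + B * x + C * y + D) ->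
  [/\ B = 0, C = 0, A = - D & 0 < D].
Proof.
move=> h.
have P0 : 0 < D.
  have := proj1 (h 0 0); rewrite expr0n /= addr0 !mulr0 !addr0 add0r; apply; exact: ltr01.
have out x y : x ^+ 2 + y ^+ 2 = 1 -> A + B * x + C * y + D <= 0.
  move=> e; rewrite leNgt; apply/negP => hp.
  have := proj2 (h x y); rewrite e mulr1 ltxx; by move=> /(_ hp).
have inP x y : x ^+ 2 + y ^+ 2 < 1 -> 0 < A * (x ^+ 2 + y ^+ 2) + B * x + C * y + D.
  by move=> hxy; apply/(h x y).
have ins (t : R) : 0 <= t < 1 -> t ^+ 2 < 1.
  move=> /andP[t0 t1]; nra.
have e1 : A + B + D = 0.
  apply: quad_root; last by have := out 1 0; rewrite expr1n expr0n /= addr0 mulr1 mulr0 addr0; apply.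
  move=> t ht; have := inP t 0; rewrite expr0n /= addr0 mulr0 addr0; apply; exact: ins.
have e2 : A + (- B) + D = 0.
  apply: quad_root; last by have := out (-1) 0; rewrite sqrrN expr1n expr0n /= addr0 mulr0 addr0 mulrN1; apply.
  move=> t ht; have := inP (- t) 0; rewrite sqrrN expr0n /= addr0 mulr0 addr0 mulrN mulNr; apply; exact: ins.
have e3 : A + C + D = 0.
  apply: quad_root; last by have := out 0 1; rewrite expr1n expr0n /= add0r mulr1 mulr0 addr0; apply.
  move=> t ht; have := inP 0 t; rewrite expr0n /= add0r mulr0 addr0; apply; exact: ins.
split; lra.
Qed.


Lemma n2M (u v : C) : n2 (u * v) = n2 u * n2 v.
Proof. by rewrite -!cabs_sqr cabsM exprMn. Qed.
Lemma n2V (u : C) : n2 (u^-1) = (n2 u)^-1.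
Proof. by rewrite -!cabs_sqr cabsV exprVn. Qed.
Lemma n2_eq0 (z : C) : n2 z = 0 -> z = 0.
Proof.
case: z => x y; rewrite /n2 reC imC => h.
have hx : x = 0 by nra.
have hy : y = 0 by nra.
by rewrite hx hy.
Qed.
Lemma n2_gt0 (z : C) : z != 0 -> 0 < n2 z.
Proof.
move=> zn0; rewrite lt_neqAle n2_ge0 andbT eq_sym; apply/negP => /eqP/n2_eq0.
by apply/eqP.
Qed.

Section Mob.
Variables (a b c d : C).
Let q (z : C) := c * z + d.
Let u (z : C) := a * z + b.
Definition Pf (bo : bool) (z : C) : R :=
  if bo then n2 (c * z + d) - n2 (a * z + b) else im ((a * z + b) * cj (c * z + d)).

Definition cA (bo : bool) : R := if bo then re c ^+ 2 + im c ^+ 2 - re a ^+ 2 - im a ^+ 2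
  else im a * re c - re a * im c.
Definition cB (bo : bool) : R := if bo then 2 * (re c * re d + im c * im d) - 2 * (re a * re b + im a * im b)
  else im a * re d + im b * re c - re a * im d - re b * im c.
Definition cC (bo : bool) : R := if bo then -2 * (im c * re d - re c * im d) + 2 * (im a * re b - re a * im b)
  else re a * re d - im b * im c + im a * im d - re b * re c.
Definition cD (bo : bool) : R := if bo then re d ^+ 2 + im d ^+ 2 - re b ^+ 2 - im b ^+ 2
  else im b * re d - re b * im d.

Lemma PfE bo x y : Pf bo (x +i* y) = cA bo * (x ^+ 2 + y ^+ 2) + cB bo * x + cC bo * y + cD bo.
Proof. by case: bo; rewrite /Pf /cA /cB /cC /cD /cj; simpC; ring. Qed.

Lemma Pfdet bo : kap bo * (4 * cA bo * cD bo - (cB bo ^+ 2 + cC bo ^+ 2)) = - 4 * n2 (a * d - b * c).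
Proof. by case: bo; rewrite /kap /cA /cB /cC /cD; simpC; ring. Qed.

Lemma PfJ bo z : c * z + d != 0 -> J bo ((a * z + b) / (c * z + d)) * n2 (c * z + d) = Pf bo z.
Proof.
move=> qn0; have n0 : n2 (c * z + d) != 0 by rewrite gt_eqF // n2_gt0.
case: bo; rewrite /J /Pf.
- by rewrite n2M n2V; field.
- rewrite /cj imM reV imV; move: n0; simpC => n0; field => //.
Qed.
End Mob.

Lemma Pf_q0 (a b c d z : C) bo : c * z + d = 0 -> Pf a b c d bo z <= 0.
Proof.
move=> hq; rewrite /Pf hq; case: bo.
  have n00 : n2 (0:C) = 0 by rewrite /n2 re0 im0 expr0n /= addr0.
  by rewrite n00 sub0r oppr_le0 n2_ge0.
by rewrite /cj; simpC; lra.
Qed.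

Lemma mob_sign bg bo (f : C -> C) : mobius_onto (dom bg) (dom bo) f ->
  exists a b c d : C, a * d - b * c != 0 /\
    (forall z, dom bg z -> c * z + d != 0 /\ f z = (a * z + b) / (c * z + d)) /\
    (forall z, dom bg z <-> 0 < Pf a b c d bo z).
Proof.
move=> [[a [b [c [d [hD hf]]]]] [hmap hinj hsurj]].
exists a, b, c, d; split => //; split => // z; split.
- move=> hz; have [qn0 fz] := hf z hz.
  have := hmap z hz; rewrite fz => /domE hJ.
  by rewrite -PfJ // mulr_gt0 // n2_gt0.
- move=> hP; have [hq|qn0] := eqVneq (c * z + d) 0.
    by have := Pf_q0 a b bo hq; lra.
  have hJ : J bo ((a * z + b) / (c * z + d)) = Pf a b c d bo z / n2 (c * z + d).
    by rewrite -PfJ // mulfK // gt_eqF // n2_gt0.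
  have : dom bo ((a * z + b) / (c * z + d)).
    by rewrite domE hJ divr_gt0 // n2_gt0.
  move=> /hsurj [z' hz' fz'].
  have [qn0' fz''] := hf z' hz'.
  rewrite fz'' in fz'.
  have e2 : (a * d - b * c) * (z' - z) = 0.
    have -> : (a * d - b * c) * (z' - z) =
      (c * z + d) * (c * z' + d) * ((a * z' + b) / (c * z' + d) - (a * z + b) / (c * z + d)).
      by field; rewrite qn0 qn0'.
    by rewrite fz' subrr mulr0.
  move: e2 => /eqP; rewrite mulf_eq0 (negbTE hD) /= subr_eq0 => /eqP <-.
  exact: hz'.
Qed.

Lemma Cxy (z : C) : z = re z +i* im z. Proof. by case: z. Qed.

Lemma mob_iso bg bo (f : C -> C) z1 z2 : mobius_onto (dom bg) (dom bo) f ->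
  dom bg z1 -> dom bg z2 -> tG bo (f z1) (f z2) = tG bg z1 z2.
Proof.
move=> hm h1 h2; have [a [b [c [d [hD [hf hs]]]]]] := mob_sign hm.
have hdet := Pfdet a b c d bo.
have [lam [lam0 [hPJ hlam]]] : exists lam, 0 < lam /\
    (forall z, Pf a b c d bo z = lam * J bg z) /\
    kap bo * lam ^+ 2 = kap bg * n2 (a * d - b * c).
  move: hs; case: bg {hm h1 h2 hf} => hs.
  - have hp x y : x ^+ 2 + y ^+ 2 < 1 <->
       0 < cA a c bo * (x ^+ 2 + y ^+ 2) + cB a b c d bo * x + cC a b c d bo * y + cD b d bo.
      by rewrite -PfE -hs domE /J /n2 reC imC subr_gt0.
    have [B0 C0 AD D0] := classD hp.
    exists (cD b d bo); split => //; split.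
      move=> z; rewrite [z]Cxy PfE B0 C0 AD /J /n2 reC imC; ring.
    move: hdet; rewrite B0 C0 AD /kap => hdet; lra.
  - have hp x y : 0 < y <->
       0 < cA a c bo * (x ^+ 2 + y ^+ 2) + cB a b c d bo * x + cC a b c d bo * y + cD b d bo.
      by rewrite -PfE -hs domE /J imC.
    have [A0 B0 D0 C0] := classH hp.
    exists (cC a b c d bo); split => //; split.
      move=> z; rewrite [z]Cxy PfE A0 B0 D0 /J imC; ring.
    move: hdet; rewrite A0 B0 D0 /kap => hdet; lra.
have [q1 fz1] := hf z1 h1; have [q2 fz2] := hf z2 h2.
rewrite fz1 fz2.
set w1 := (a * z1 + b) / (c * z1 + d).
set w2 := (a * z2 + b) / (c * z2 + d).
have n1p : 0 < n2 (c * z1 + d) by rewrite n2_gt0.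
have n2p : 0 < n2 (c * z2 + d) by rewrite n2_gt0.
have hJ1 : J bo w1 = lam * J bg z1 / n2 (c * z1 + d).
  by rewrite -hPJ -PfJ // mulfK // gt_eqF.
have hJ2 : J bo w2 = lam * J bg z2 / n2 (c * z2 + d).
  by rewrite -hPJ -PfJ // mulfK // gt_eqF.
pose k := n2 (a * d - b * c) / (n2 (c * z1 + d) * n2 (c * z2 + d)).
have k0 : 0 < k by rewrite /k divr_gt0 ?mulr_gt0 // n2_gt0.
have hN : n2 (w1 - w2) = k * n2 (z1 - z2).
  have -> : w1 - w2 = (a * d - b * c) * (z1 - z2) / ((c * z1 + d) * (c * z2 + d)).
    by rewrite /w1 /w2; field; rewrite q1 q2.
  by rewrite n2M n2V !n2M /k; field; rewrite !gt_eqF.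
have hK : kap bo * (J bo w1 * J bo w2) = k * (kap bg * (J bg z1 * J bg z2)).
  rewrite hJ1 hJ2.
  have -> : kap bo * (lam * J bg z1 / n2 (c * z1 + d) * (lam * J bg z2 / n2 (c * z2 + d)))
     = kap bo * lam ^+ 2 * (J bg z1 * J bg z2) / (n2 (c * z1 + d) * n2 (c * z2 + d)).
    by field; rewrite !gt_eqF.
  by rewrite hlam /k; field; rewrite !gt_eqF.
rewrite /tG /den !cabsE hN hK -mulrDr !(sqrtrM _ (ltW k0)).
have sk : Num.sqrt k != 0 by rewrite gt_eqF // sqrtr_gt0.
by rewrite -mulf_div divff // mul1r.
Qed.

Lemma lb_aux (N M S D k : R) : 0 <= N -> 0 < D -> 0 < k -> 0 < M -> M <= S -> S <= k * D ->
  N / D <= k * (N / M).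
Proof.
move=> N0 D0 k0 M0 MS SD.
rewrite ler_pdivrMr //.
have -> : k * (N / M) * D = (N / M) * (k * D) by ring.
have NM0 : 0 <= N / M by rewrite divr_ge0 // ltW.
apply: (le_trans _ (ler_wpM2l NM0 (le_trans MS SD))).
by rewrite divfK // gt_eqF.
Qed.

Lemma bGp_ub b p z1 z2 : (1 <= p)%E -> dom b z1 -> dom b z2 ->
  bGp (dom b) p z1 z2 <= powR 2 (1 - inv_ext p) * tG b z1 z2.
Proof.
move=> p1 h1 h2; apply: ge_sup.
  exists (bquot p z1 z2 (if b then 1 else 0)), (if b then 1 else 0) => //.
  apply: bd_J'; case: b {h1 h2} => /=; rewrite /J.
    by rewrite /n2 re1 im1 expr1n expr0n /= addr0 subrr.
  by [].
by move=> y [w hw <-]; exact: bquot_ub.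
Qed.

Lemma bGp_lb b p z1 z2 : (1 <= p)%E -> dom b z1 -> dom b z2 ->
  tG b z1 z2 <= (if b then 2 else 1) * bGp (dom b) p z1 z2.
Proof.
move=> p1 h1 h2.
have [w [hw hS]] : exists w, J b w = 0 /\
    cabs (z1 - w) + cabs (w - z2) <= (if b then 2 else 1) * den b z1 z2.
  by case: b h1 h2 => h1 h2; [exact: lb_D | rewrite mul1r; exact: lb_H].
have hub : has_ubound [set bquot p z1 z2 z | z in cboundary (dom b)].
  exists (powR 2 (1 - inv_ext p) * tG b z1 z2) => y [w' hw' <-].
  exact: bquot_ub.
have hle : bquot p z1 z2 w <= bGp (dom b) p z1 z2.
  apply: ub_le_sup hub _ _; exists w => //; exact: bd_J'.
have kp : 0 < (if b then 2 else 1 : R) by case: (b) ; [rewrite ltr0n | exact: ltr01].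
apply: (le_trans _ (ler_wpM2l (ltW kp) hle)).
rewrite bquotE /tG.
have D0 := den_gt0 _ _ _ h1 h2.
have Sden := sum_ge_den _ _ _ _ h1 h2 hw.
set S := cabs (z1 - w) + cabs (w - z2) in hS Sden.
have hM := Mp_ge _ _ _ p1 (cabs_ge0 (z1 - w)) (cabs_ge0 (w - z2)).
have hM2 := Mp_le _ _ _ p1 (cabs_ge0 (z1 - w)) (cabs_ge0 (w - z2)).
rewrite -/S in hM hM2.
have M0 : 0 < Mp p (cabs (z1 - w)) (cabs (w - z2)).
  have K0 := K_gt0 p.
  rewrite -(pmulr_rgt0 _ K0); lra.
exact: lb_aux (cabs_ge0 _) D0 kp M0 hM2 hS.
Qed.
End S.

Local Close Scope complex_scope.
Local Open Scope ring_scope.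

Theorem proposition4p5 (R : realType) (Gdisk Odisk : bool) (f : R[i] -> R[i])
    (p : \bar R) :
  let G := if Gdisk then @unit_disk R else @upper_half_plane R in
  let Om := if Odisk then @unit_disk R else @upper_half_plane R in
  let L : R := if Gdisk then powR 2 (2 - inv_ext p) else powR 2 (1 - inv_ext p) in
  mobius_onto G Om f ->
  (1 <= p)%E ->
  forall z1 z2 : R[i], G z1 -> G z2 ->
    bGp Om p (f z1) (f z2) <= L * bGp G p z1 z2.
Proof.
move=> G Om L hm p1 z1 z2 h1 h2.
change (bGp (dom R Odisk) p (f z1) (f z2) <= L * bGp (dom R Gdisk) p z1 z2).
have hm' : mobius_onto (dom R Gdisk) (dom R Odisk) f by exact: hm.
have [_ [hmap _ _]] := hm'.
have hw1 : dom R Odisk (f z1) by exact: hmap.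
have hw2 : dom R Odisk (f z2) by exact: hmap.
apply: (le_trans (bGp_ub p1 hw1 hw2)).
rewrite (mob_iso hm' h1 h2).
have hlb := bGp_lb p1 h1 h2.
have K0 := K_gt0 R p.
apply: (le_trans (ler_wpM2l (ltW K0) hlb)).
rewrite /L; case: (Gdisk).
- have e : powR 2 (2 - inv_ext p) = 2 * powR 2 (1 - inv_ext p).
    have -> : (2:R) - inv_ext p = 1 + (1 - inv_ext p) by lra.
    rewrite powRD ?powRr1 //; last by rewrite pnatr_eq0 implybT.
  by rewrite e mulrCA mulrA.
- by rewrite mul1r.
Qed.
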